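(* Let $\pi_1,\pi_2:\mathbb P^3\dashrightarrow\mathbb P^2$ be linear projections with centers $c_1\neq c_2$ and fundamental matrix $F$. Under the bijection between lines $\ell_F\subset\mathbb P(\mathbb C^{3\times3})$ through $F$ and quadrics $Q\subset\mathbb P^3$ through $c_1,c_2$, the quadric $Q$ corresponding to $\ell_F$ is obtained as follows: for any $M\in\ell_F$ with $M\neq F$, $Q$ is cut out by the equation $\pi_2(p)^\top M\pi_1(p)=0$.
   Context: Work over $\mathbb C$. A linear projection $\pi:\mathbb P^3\dashrightarrow\mathbb P^2$ is $p\mapsto Ap$, $A\in\mathbb C^{3\times4}$ of rank three, with center spanning $\ker A$. The fundamental matrix of $(\pi_1,\pi_2)$ is the rank-two $F\in\mathbb P(\mathbb C^{3\times3})$ with $\pi_2(p)^\top F\pi_1(p)=0$ for all $p\in\mathbb P^3$. The claim includes that this $Q$ does not depend on the choice of $M\in\ell_F\setminus\{F\}$ and that $\ell_F\mapsto Q$ is a bijection onto the quadrics through $c_1,c_2$. *)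

(* Defs.v *)
From HB Require Import structures.
From mathcomp Require Import all_boot all_order all_algebra.
From mathcomp Require Export complex.
Set Implicit Arguments. Unset Strict Implicit. Unset Printing Implicit Defensive.
Import GRing.Theory.
Local Open Scope ring_scope.

(* The ground field: C := R[i] for a real closed field R (e.g. the reals),
   an algebraically closed field of characteristic 0. *)

Section Defs.
Variable K : fieldType.

(* pi(p) = A p for a camera matrix A : 'M_(3,4); a linear projection
   P^3 --> P^2 is such an A of rank 3. *)
Definition is_projection (A : 'M[K]_(3,4)) : Prop := \rank A = 3%N.

Definition is_center (A : 'M[K]_(3,4)) (c : 'cV[K]_4) : Prop :=
  c != 0 /\ A *m c = 0.

Definition bil3 (x : 'cV[K]_3) (M : 'M[K]_3) (y : 'cV[K]_3) : K :=
  (x^T *m M *m y) 0 0.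

Definition is_fundamental (A1 A2 : 'M[K]_(3,4)) (F : 'M[K]_3) : Prop :=
  \rank F = 2%N /\ forall p : 'cV[K]_4, bil3 (A2 *m p) F (A1 *m p) = 0.

Definition epi_form (A1 A2 : 'M[K]_(3,4)) (M : 'M[K]_3) (p : 'cV[K]_4) : K :=
  bil3 (A2 *m p) M (A1 *m p).

(* Quadrics in P^3 are represented by quadratic forms q : K^4 -> K given by a
   4x4 matrix,  q_B(p) = p^T B p ; a quadratic form defines a quadric iff it
   is not identically zero, and two such define the same quadric iff they are
   proportional by a nonzero scalar. *)
Definition qform (B : 'M[K]_4) (p : 'cV[K]_4) : K := (p^T *m B *m p) 0 0.

Definition nonzero_form (q : 'cV[K]_4 -> K) : Prop := exists p, q p != 0.

Definition same_quadric (q q' : 'cV[K]_4 -> K) : Prop :=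
  exists a : K, a != 0 /\ forall p, q p = a * q' p.

(* A line l_F in P(K^{3x3}) through F: a 2-dimensional subspace containing F.
   Its points other than F are the M in l_F not in the span of F. *)
Definition line_through (F : 'M[K]_3) (L : {vspace 'M[K]_3}) : Prop :=
  \dim L = 2%N /\ F \in L.

Definition point_of_line_not_F (F : 'M[K]_3) (L : {vspace 'M[K]_3})
  (M : 'M[K]_3) : Prop := M \in L /\ M \notin <[F]>%VS.

End Defs.

(* Main.v *)
Require Import Defs.
From HB Require Import structures.
From mathcomp Require Import all_boot all_order all_algebra.
From mathcomp Require Import complex ring.
From Stdlib Require Import Classical.
Set Implicit Arguments. Unset Strict Implicit. Unset Printing Implicit Defensive.
Import GRing.Theory.
Local Open Scope ring_scope.

Section Gen.
Variable K : fieldType.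

Definition bf m n (x : 'cV[K]_m) (M : 'M[K]_(m,n)) (y : 'cV[K]_n) : K :=
  (x^T *m M *m y) 0 0.

Lemma bfDl m n x1 x2 (M : 'M[K]_(m,n)) y : bf (x1 + x2) M y = bf x1 M y + bf x2 M y.
Proof. by rewrite /bf linearD /= !mulmxDl mxE. Qed.
Lemma bfZl m n a x (M : 'M[K]_(m,n)) y : bf (a *: x) M y = a * bf x M y.
Proof. by rewrite /bf linearZ /= -!scalemxAl mxE. Qed.
Lemma bfDr m n x (M : 'M[K]_(m,n)) y1 y2 : bf x M (y1 + y2) = bf x M y1 + bf x M y2.
Proof. by rewrite /bf mulmxDr mxE. Qed.
Lemma bfZr m n a x (M : 'M[K]_(m,n)) y : bf x M (a *: y) = a * bf x M y.
Proof. by rewrite /bf -scalemxAr mxE. Qed.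
Lemma bfDm m n x (M1 M2 : 'M[K]_(m,n)) y : bf x (M1 + M2) y = bf x M1 y + bf x M2 y.
Proof. by rewrite /bf mulmxDr mulmxDl mxE. Qed.
Lemma bfZm m n a x (M : 'M[K]_(m,n)) y : bf x (a *: M) y = a * bf x M y.
Proof. by rewrite /bf -scalemxAr -scalemxAl mxE. Qed.
Lemma bfNl m n x (M : 'M[K]_(m,n)) y : bf (- x) M y = - bf x M y.
Proof. by rewrite -scaleN1r bfZl mulN1r. Qed.
Lemma bfNr m n x (M : 'M[K]_(m,n)) y : bf x M (- y) = - bf x M y.
Proof. by rewrite -scaleN1r bfZr mulN1r. Qed.
Lemma bfNm m n x (M : 'M[K]_(m,n)) y : bf x (- M) y = - bf x M y.
Proof. by rewrite -scaleN1r bfZm mulN1r. Qed.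
Lemma bfBl m n x1 x2 (M : 'M[K]_(m,n)) y : bf (x1 - x2) M y = bf x1 M y - bf x2 M y.
Proof. by rewrite bfDl bfNl. Qed.
Lemma bfBr m n x (M : 'M[K]_(m,n)) y1 y2 : bf x M (y1 - y2) = bf x M y1 - bf x M y2.
Proof. by rewrite bfDr bfNr. Qed.
Lemma bfBm m n x (M1 M2 : 'M[K]_(m,n)) y : bf x (M1 - M2) y = bf x M1 y - bf x M2 y.
Proof. by rewrite bfDm bfNm. Qed.
Lemma bf0l m n (M : 'M[K]_(m,n)) y : bf 0 M y = 0.
Proof. by rewrite /bf linear0 !mul0mx mxE. Qed.
Lemma bf0r m n x (M : 'M[K]_(m,n)) : bf x M 0 = 0.
Proof. by rewrite /bf mulmx0 mxE. Qed.
Lemma bf_mull m n p (A : 'M[K]_(p,m)) x (M : 'M[K]_(p,n)) y :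
  bf (A *m x) M y = bf x (A^T *m M) y.
Proof. by rewrite /bf trmx_mul !mulmxA. Qed.
Lemma bf_mulr m n p (A : 'M[K]_(n,p)) x (M : 'M[K]_(m,n)) y :
  bf x M (A *m y) = bf x (M *m A) y.
Proof. by rewrite /bf !mulmxA. Qed.
Lemma bf_tr n x (M : 'M[K]_n) y : bf x M^T y = bf y M x.
Proof.
have E (A : 'M[K]_1) : A 0 0 = A^T 0 0 by rewrite mxE.
by rewrite /bf [RHS]E !trmx_mul !trmxK mulmxA.
Qed.
Lemma bf_delta m n i j (M : 'M[K]_(m,n)) : bf (delta_mx i 0) M (delta_mx j 0) = M i j.
Proof. by rewrite /bf trmx_delta -rowE -colE !mxE. Qed.

Lemma rank1_mul n (c w p : 'cV[K]_n) : (c *m w^T) *m p = (w^T *m p) 0 0 *: c.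
Proof. by rewrite -mulmxA {1}[w^T *m p]mx11_scalar mul_mx_scalar. Qed.

Lemma ker1 m n (A : 'M[K]_(m, n.+1)) (x y : 'cV[K]_n.+1) : \rank A = n -> A *m y = 0 -> y != 0 ->
  A *m x = 0 -> exists t, x = t *: y.
Proof.
move=> rA Ay y0 Ax.
have sy : (y^T <= kermx A^T)%MS by rewrite sub_kermx -trmx_mul Ay trmx0.
have sx : (x^T <= kermx A^T)%MS by rewrite sub_kermx -trmx_mul Ax trmx0.
have rk : \rank (kermx A^T) = 1%N by rewrite mxrank_ker mxrank_tr rA subSnn.
have ry : \rank y^T = 1%N by rewrite rank_rV trmx_eq0 y0.
have sKy : (kermx A^T <= y^T)%MS.
  by rewrite -(mxrank_leqif_sup sy).2 rk ry.
have /sub_rVP [t ht] := submx_trans sx sKy.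
by exists t; rewrite -[x]trmxK ht linearZ /= trmxK.
Qed.

Lemma exists_w m n (A : 'M[K]_(m,n)) (c c' : 'cV[K]_n) : A *m c != 0 -> A *m c' = 0 ->
  exists w : 'cV[K]_n, (w^T *m c) 0 0 = 1 /\ (w^T *m c') 0 0 = 0.
Proof.
move=> Ac Ac'; set e := A *m c.
have [j ej] : exists j, e j 0 != 0.
  apply: NNPP => H; move/eqP: Ac; apply; apply/matrixP => i k.
  rewrite (ord1 k) [RHS]mxE; apply/eqP/negPn/negP => Hn; apply: H; by exists i.
exists ((e j 0)^-1 *: (A^T *m delta_mx j 0)).
rewrite linearZ /= trmx_mul trmxK trmx_delta -!scalemxAl -!mulmxA -/e Ac' mulmx0 scaler0.
clearbody e; rewrite -rowE; split; last by rewrite mxE.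
rewrite !mxE; exact: mulVf.
Qed.
End Gen.

Section Main.
Variable K : fieldType.
Variables (A1 A2 : 'M[K]_(3,4)) (c1 c2 : 'cV[K]_4) (F : 'M[K]_3).
Hypothesis rA1 : \rank A1 = 3%N.
Hypothesis rA2 : \rank A2 = 3%N.
Hypothesis c1n0 : c1 != 0.
Hypothesis c2n0 : c2 != 0.
Hypothesis A1c1 : A1 *m c1 = 0.
Hypothesis A2c2 : A2 *m c2 = 0.
Hypothesis hc : forall a : K, c1 != a *: c2.
Hypothesis rF : \rank F = 2%N.
Hypothesis hF : forall p, bf (A2 *m p) F (A1 *m p) = 0.

Definition beta (G : 'M[K]_3) x y := bf (A2 *m x) G (A1 *m y).

Lemma betaDl G x1 x2 y : beta G (x1 + x2) y = beta G x1 y + beta G x2 y.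
Proof. by rewrite /beta mulmxDr bfDl. Qed.
Lemma betaZl G a x y : beta G (a *: x) y = a * beta G x y.
Proof. by rewrite /beta -scalemxAr bfZl. Qed.
Lemma betaDr G x y1 y2 : beta G x (y1 + y2) = beta G x y1 + beta G x y2.
Proof. by rewrite /beta mulmxDr bfDr. Qed.
Lemma betaZr G a x y : beta G x (a *: y) = a * beta G x y.
Proof. by rewrite /beta -scalemxAr bfZr. Qed.
Lemma betaBm G1 G2 x y : beta (G1 - G2) x y = beta G1 x y - beta G2 x y.
Proof. by rewrite /beta bfBm. Qed.
Lemma betaDm G1 G2 x y : beta (G1 + G2) x y = beta G1 x y + beta G2 x y.
Proof. by rewrite /beta bfDm. Qed.
Lemma betaZm a G x y : beta (a *: G) x y = a * beta G x y.
Proof. by rewrite /beta bfZm. Qed.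
Lemma beta0l G y : beta G 0 y = 0.
Proof. by rewrite /beta mulmx0 bf0l. Qed.
Lemma beta_c1r G x : beta G x c1 = 0.
Proof. by rewrite /beta A1c1 bf0r. Qed.
Lemma beta_c2l G y : beta G c2 y = 0.
Proof. by rewrite /beta A2c2 bf0l. Qed.

Lemma anti G : (forall p, beta G p p = 0) -> forall x y, beta G x y = - beta G y x.
Proof.
move=> H x y; have := H (x + y).
rewrite !betaDl !betaDr !H add0r addr0 => /eqP; rewrite addr_eq0 => /eqP //.
Qed.

Lemma rinv1 : exists B1 : 'M[K]_(4,3), A1 *m B1 = 1%:M.
Proof. by apply/row_freeP; rewrite /row_free rA1. Qed.
Lemma rinv2 : exists B2 : 'M[K]_(4,3), A2 *m B2 = 1%:M.
Proof. by apply/row_freeP; rewrite /row_free rA2. Qed.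

Lemma beta_zero G : (forall x y, beta G x y = 0) -> G = 0.
Proof.
move=> H; have [B1 hB1] := rinv1; have [B2 hB2] := rinv2.
apply/matrixP => i j; rewrite [RHS]mxE -bf_delta.
have := H (B2 *m delta_mx i 0) (B1 *m delta_mx j 0).
by rewrite /beta !mulmxA hB1 hB2 !mul1mx.
Qed.

Lemma beta_nz G : G != 0 -> exists x y, beta G x y != 0.
Proof.
move=> G0; apply: NNPP => H; move/eqP: G0; apply; apply: beta_zero => x y.
apply/eqP; apply/negPn/negP => Hn; apply: H; by exists x, y.
Qed.

Lemma F0 : F != 0.
Proof. by apply/eqP => F0; move: rF; rewrite F0 mxrank0. Qed.

Lemma indep12 a b : a *: c1 + b *: c2 = 0 -> a = 0 /\ b = 0.
Proof.
move=> H.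
have a0 : a = 0.
  apply/eqP/negP => /negP an0; move/eqP: (hc (- b / a)); apply.
  apply: (scalerI an0); rewrite scalerA mulrCA mulfV // mulr1 scaleNr.
  by apply/eqP; rewrite -addr_eq0 H.
split => //; move: H; rewrite a0 scale0r add0r => /eqP.
by rewrite scaler_eq0 (negbTE c2n0) orbF => /eqP.
Qed.

Lemma span4 (u v : 'cV[K]_4) : beta F u v = 1 ->
  forall z, exists a b c d, z = a *: c1 + b *: c2 + c *: u + d *: v.
Proof.
move=> huv z.
have aF := anti hF.
have Fc1 y : beta F c1 y = 0 by rewrite aF beta_c1r ?oppr0 // ; rewrite /beta A1c1 bf0r oppr0.
have Fc2 y : beta F c2 y = 0 by rewrite beta_c2l.
have Fuu : beta F u u = 0 by apply: hF.
have Fvv : beta F v v = 0 by apply: hF.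
have Fvu : beta F v u = -1 by rewrite aF huv.
pose X := [tuple c1; c2; u; v].
have fX : free X.
  apply/freeP => k; rewrite !big_ord_recl big_ord0 addr0 /= => Hk.
  have := congr1 (fun w => beta F w u) Hk; have := congr1 (fun w => beta F w v) Hk.
  rewrite /= !betaDl !betaZl !Fc1 !Fc2 Fuu Fvv Fvu huv.
  rewrite !beta0l !mulr0 !add0r !addr0 mulr1 mulrN1 => k2 /eqP; rewrite oppr_eq0 => /eqP k3.
  move: Hk; rewrite k2 k3 !scale0r !addr0 => /indep12 [k0 k1].
  case=> [[|[|[|[|i]]]] Hi] //.
  - by rewrite -k0; congr k; apply/val_inj.
  - by rewrite -k1; congr k; apply/val_inj.
  - by rewrite -k2; congr k; apply/val_inj.
  - by rewrite -k3; congr k; apply/val_inj.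
have spX : <<X>>%VS = fullv.
  apply/eqP; rewrite eqEdim subvf dimvf dim_matrix.
  by move/eqP: fX => ->.
have zX : z \in <<X>>%VS by rewrite spX memvf.
rewrite (coord_span zX).
rewrite !big_ord_recl big_ord0 addr0 /=.
by do 4 eexists; rewrite !addrA.
Qed.

Lemma hFb p : beta F p p = 0. Proof. exact: hF. Qed.

Lemma kerK G : (forall p, beta G p p = 0) -> G \in <[F]>%VS.
Proof.
move=> HG.
have [x [y hxy]] := beta_nz F0.
have [u huv] : exists u, beta F u y = 1.
  by exists ((beta F x y)^-1 *: x); rewrite betaZl mulVf.
set k := beta G u y.
pose H := G - k *: F.
have HH p : beta H p p = 0 by rewrite betaBm betaZm HG hFb mulr0 subr0.
have aH := anti HH.
have Hc1 z : beta H c1 z = 0 by rewrite aH beta_c1r oppr0.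
have Hc2l z : beta H c2 z = 0 by exact: beta_c2l.
have Hc2r z : beta H z c2 = 0 by rewrite aH beta_c2l oppr0.
have Hc1r z : beta H z c1 = 0 by exact: beta_c1r.
have Huv : beta H u y = 0 by rewrite betaBm betaZm huv mulr1 subrr.
have Huu := HH u; have Hyy := HH y.
have Hyu : beta H y u = 0 by rewrite aH Huv oppr0.
have H0 : H = 0.
  apply: beta_zero => x1 y1.
  have [a [b [c [d ->]]]] := span4 huv x1.
  have [a' [b' [c' [d' ->]]]] := span4 huv y1.
  rewrite !betaDl !betaZl !Hc1 !Hc2l !betaDr !betaZr !Hc1r !Hc2r Huv Huu Hyy Hyu.
  by rewrite !(mulr0, addr0, add0r).
move/eqP: H0; rewrite subr_eq0 => /eqP ->.
by rewrite memvZ // memv_line.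
Qed.

Lemma A1c2 : A1 *m c2 != 0.
Proof.
apply/negP => /eqP H; have [t ht] := ker1 rA1 A1c1 c1n0 H.
have t0 : t != 0 by apply: contraNneq c2n0 => t0; rewrite ht t0 scale0r.
by move/eqP: (hc t^-1); apply; rewrite ht scalerA mulVf // scale1r.
Qed.

Lemma A2c1 : A2 *m c1 != 0.
Proof.
apply/negP => /eqP H; have [t ht] := ker1 rA2 A2c2 c2n0 H.
by move/eqP: (hc t).
Qed.

Lemma BA1 (B1 : 'M[K]_(4,3)) : A1 *m B1 = 1%:M -> forall p, exists t, B1 *m (A1 *m p) = p + t *: c1.
Proof.
move=> hB p.
have H : A1 *m (B1 *m (A1 *m p) - p) = 0 by rewrite mulmxBr !mulmxA hB mul1mx subrr.
have [t ht] := ker1 rA1 A1c1 c1n0 H.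
by exists t; rewrite -ht addrC subrK.
Qed.

Lemma BA2 (B2 : 'M[K]_(4,3)) : A2 *m B2 = 1%:M -> forall p, exists t, B2 *m (A2 *m p) = p + t *: c2.
Proof.
move=> hB p.
have H : A2 *m (B2 *m (A2 *m p) - p) = 0 by rewrite mulmxBr !mulmxA hB mul1mx subrr.
have [t ht] := ker1 rA2 A2c2 c2n0 H.
by exists t; rewrite -ht addrC subrK.
Qed.

Lemma surjS (B : 'M[K]_4) : bf c1 B c1 = 0 -> bf c2 B c2 = 0 ->
  exists M, forall p, beta M p p = bf p B p.
Proof.
move=> B11 B22.
have [w1 [w1c1 w1c2]] := exists_w A2c1 A2c2.
have [w2 [w2c2 w2c1]] := exists_w A1c2 A1c1.
pose P1 := 1%:M - c1 *m w1^T.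
pose P2 := 1%:M - c2 *m w2^T.
pose Pi := 1%:M - c1 *m w1^T - c2 *m w2^T.
have P1E y : P1 *m y = y - (w1^T *m y) 0 0 *: c1 by rewrite mulmxBl mul1mx rank1_mul.
have P2E y : P2 *m y = y - (w2^T *m y) 0 0 *: c2 by rewrite mulmxBl mul1mx rank1_mul.
have PiE y : Pi *m y = y - (w1^T *m y) 0 0 *: c1 - (w2^T *m y) 0 0 *: c2
  by rewrite !mulmxBl mul1mx !rank1_mul.
pose N := P2^T *m (B + B^T) *m P1 - Pi^T *m B *m Pi.
have NE x y : bf x N y = bf (P2 *m x) (B + B^T) (P1 *m y) - bf (Pi *m x) B (Pi *m y).
  by rewrite /N bfBm !bf_mull !bf_mulr ?mulmxA.
have Nc1 x : bf x N c1 = 0.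
  by rewrite NE (P1E c1) (PiE c1) w1c1 w2c1 ?scale1r ?scale0r !(subrr, subr0, bf0r, bf0l).
have Nc2 y : bf c2 N y = 0.
  by rewrite NE (P2E c2) (PiE c2) w1c2 w2c2 ?scale1r ?scale0r !(subrr, subr0, bf0r, bf0l).
have Npp p : bf p N p = bf p B p.
  rewrite NE P1E P2E !PiE !bfDm !bf_tr.
  rewrite !(bfBl, bfBr, bfZl, bfZr) B11 B22.
  ring.
have [B1 hB1] := rinv1; have [B2 hB2] := rinv2.
exists (B2^T *m N *m B1) => p.
rewrite /beta -bf_mulr -bf_mull.
have [t ->] := BA1 hB1 p; have [s ->] := BA2 hB2 p.
by rewrite bfDl !bfDr !bfZl !bfZr !Nc1 !Nc2 !(mulr0, addr0) Npp.
Qed.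


Lemma dim2 M : M \notin <[F]>%VS -> \dim (<[F]> + <[M]>)%VS = 2%N.
Proof.
move=> MF.
have M0 : M != 0 by apply: contraNneq MF => ->; rewrite mem0v.
rewrite dimv_disjoint_sum ?dim_vline ?F0 ?M0 //.
apply/eqP; rewrite -subv0; apply/subvP => x /memv_capP [/vlineP [a ->] /vlineP [b hb]].
have [b0|bn0] := eqVneq b 0.
  by move: hb; rewrite b0 scale0r => ->; rewrite memv0.
case/negP: MF; apply/vlineP; exists (b^-1 * a).
by rewrite -scalerA hb scalerA mulVf // scale1r.
Qed.

Lemma line2 (L : {vspace 'M[K]_3}) M : \dim L = 2%N -> F \in L -> M \in L ->
  M \notin <[F]>%VS -> L = (<[F]> + <[M]>)%VS.
Proof.
move=> dL FL ML MF; apply/eqP; rewrite eq_sym eqEdim subv_add -!memvE FL ML /=.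
by rewrite dim2 // dL.
Qed.

Lemma in_line2 M X : X \in (<[F]> + <[M]>)%VS -> exists a b, X = a *: M + b *: F.
Proof.
case/memv_addP => u /vlineP [b ->] [v /vlineP [a ->] ->].
by exists a, b; rewrite addrC.
Qed.

Lemma epi_lin a b M p : beta (a *: M + b *: F) p p = a * beta M p p.
Proof. by rewrite betaDm !betaZm hFb mulr0 addr0. Qed.

Lemma epiE M p : epi_form A1 A2 M p = beta M p p. Proof. by []. Qed.
Lemma qformE (B : 'M[K]_4) p : qform B p = bf p B p. Proof. by []. Qed.

Lemma main_gen :
  (forall L : {vspace 'M[K]_3}, line_through F L ->
     (forall M, point_of_line_not_F F L M ->
        nonzero_form (epi_form A1 A2 M) /\
        epi_form A1 A2 M c1 = 0 /\ epi_form A1 A2 M c2 = 0) /\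
     (forall M M', point_of_line_not_F F L M -> point_of_line_not_F F L M' ->
        same_quadric (epi_form A1 A2 M) (epi_form A1 A2 M'))) /\
  (forall B : 'M[K]_4,
     nonzero_form (qform B) -> qform B c1 = 0 -> qform B c2 = 0 ->
     exists L : {vspace 'M[K]_3},
       (line_through F L /\
        forall M, point_of_line_not_F F L M ->
          same_quadric (epi_form A1 A2 M) (qform B)) /\
       forall L' : {vspace 'M[K]_3},
         line_through F L' ->
         (forall M, point_of_line_not_F F L' M ->
            same_quadric (epi_form A1 A2 M) (qform B)) ->
         L' = L).
Proof.
have nz M : M \notin <[F]>%VS -> nonzero_form (epi_form A1 A2 M).
  move=> MF; apply: NNPP => H; case/negP: MF; apply: kerK => p.
  apply/eqP/negPn/negP => Hn; apply: H; by exists p.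
split.
  move=> L [dL FL]; split.
    move=> M [ML MF]; split; first exact: nz.
    by split; [apply: beta_c1r | apply: beta_c2l].
  move=> M M' [ML MF] [ML' MF'].
  have LE := line2 dL FL ML MF.
  move: ML'; rewrite LE => /in_line2 [a [b hM']].
  have a0 : a != 0.
    by apply: contraNneq MF' => a0; rewrite hM' a0 scale0r add0r memvZ // memv_line.
  exists a^-1; split; first by rewrite invr_eq0.
  by move=> p; rewrite !epiE hM' (epi_lin a b M p) mulrA mulVf // mul1r.
move=> B nzB B1 B2.
have [M0 hM0] := surjS B1 B2.
have M0F : M0 \notin <[F]>%VS.
  apply/negP => /vlineP [k hk]; case: nzB => p; rewrite qformE -hM0 hk.
  by rewrite betaZm hFb mulr0 eqxx.
have FL0 : F \in (<[F]> + <[M0]>)%VS by apply: (subvP (addvSl _ _)); exact: memv_line.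
exists (<[F]> + <[M0]>)%VS; split.
  split; first by split; [exact: dim2 | exact: FL0].
  move=> M [/in_line2 [a [b hM]] MF].
  have a0 : a != 0.
    by apply: contraNneq MF => a0; rewrite hM a0 scale0r add0r memvZ // memv_line.
  exists a; split => // p.
  by rewrite epiE qformE hM (epi_lin a b M0 p) hM0.
move=> L' [dL' FL'] HL'.
have : ~~ (L' <= <[F]>)%VS.
  apply/negP => /dimvS; by rewrite dL' dim_vline F0.
case/subvPn => M' ML' MF'.
have [a [a0 ha]] := HL' M' (conj ML' MF').
have : M' - a *: M0 \in <[F]>%VS.
  apply: kerK => p; rewrite betaBm betaZm.
  have := ha p; rewrite epiE qformE -hM0 => ->.
  by rewrite subrr.
case/vlineP => k hk.
have M0L' : M0 \in L'.
  have -> : M0 = a^-1 *: (M' - k *: F).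
    by rewrite -hk opprB addrC subrK scalerA mulVf // scale1r.
  by rewrite memvZ // memvB // memvZ.
exact: line2 dL' FL' M0L' M0F.
Qed.

End Main.

Theorem mainTheorem11 (R : rcfType) (A1 A2 : 'M[R[i]]_(3,4))
  (c1 c2 : 'cV[R[i]]_4) (F : 'M[R[i]]_3) :
  is_projection A1 -> is_projection A2 ->
  is_center A1 c1 -> is_center A2 c2 ->
  (forall a : R[i], c1 != a *: c2) ->
  is_fundamental A1 A2 F ->
  (* well-definedness: each line l_F through F gives, via any M in l_F \ {F},
     a quadric through c1 and c2, independent of the choice of M *)
  (forall L : {vspace 'M[R[i]]_3}, line_through F L ->
     (forall M, point_of_line_not_F F L M ->
        nonzero_form (epi_form A1 A2 M) /\
        epi_form A1 A2 M c1 = 0 /\ epi_form A1 A2 M c2 = 0) /\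
     (forall M M', point_of_line_not_F F L M -> point_of_line_not_F F L M' ->
        same_quadric (epi_form A1 A2 M) (epi_form A1 A2 M'))) /\
  (* bijectivity: every quadric through c1, c2 arises from exactly one line *)
  (forall B : 'M[R[i]]_4,
     nonzero_form (qform B) -> qform B c1 = 0 -> qform B c2 = 0 ->
     exists L : {vspace 'M[R[i]]_3},
       (line_through F L /\
        forall M, point_of_line_not_F F L M ->
          same_quadric (epi_form A1 A2 M) (qform B)) /\
       forall L' : {vspace 'M[R[i]]_3},
         line_through F L' ->
         (forall M, point_of_line_not_F F L' M ->
            same_quadric (epi_form A1 A2 M) (qform B)) ->
         L' = L).
Proof.
move=> hA1 hA2 [c1n0 A1c1] [c2n0 A2c2] hc [rF hF].
by apply: main_gen.
Qed.
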